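(* An abelian subgroup of the symmetric group $S_n$ can be expressed as a direct product of at most $n/2$ non-trivial groups. *)

(* Defs.v *)
From mathcomp Require Import all_boot all_fingroup all_solvable.

(* Main.v *)
Require Import Defs.
From mathcomp Require Import all_boot all_fingroup all_solvable.
From mathcomp Require Import zify.

Set Implicit Arguments.
Unset Strict Implicit.
Unset Printing Implicit Defensive.
Local Open Scope group_scope.

Definition moved (T : finType) (E : {set {perm T}}) : {set T} :=
  [set y | [exists s in E, s y != y]].

Lemma two_le_exp p a : prime p -> (2 * a <= p ^ a)%N \/ a = 0%N.
Proof.
move=> pp; case: a => [|a]; first by right.
left; have p2 := prime_gt1 pp.
have h1 : (2 ^ a.+1 <= p ^ a.+1)%N by rewrite leq_exp2r.
apply: leq_trans h1; rewrite expnS.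
have := ltn_expl a (isT : 1 < 2)%N; lia.
Qed.

Lemma key (T : finType) p : prime p -> forall (E : {group {perm T}}),
  p.-group E -> abelian E -> (2 * logn p #|E| <= #|moved E|)%N.
Proof.
move=> pp E0; have [m] := ubnP #|E0|; elim: m E0 => // m IH E ltEm pE cE.
have [E1|/trivgPn [g gE ng1]] := eqVneq (E : {set _}) 1.
  by rewrite E1 cards1 logn1.
have [x gx] : exists x, g x != x.
  apply/existsP; apply: contraR ng1; rewrite negb_exists => /forallP H.
  by apply/eqP/permP => y; rewrite perm1; apply/eqP; move: (H y); rewrite negbK.
set S := 'C_E[x | 'P]%G.
set O := orbit 'P E x.
have sSE : S \subset E by rewrite subsetIl.
have cardO : #|O| = #|E : S| by rewrite card_orbit.
have xO : x \in O by rewrite orbit_refl.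
have gxO : g x \in O by rewrite -[g x]/(aperm x g) mem_orbit.
have O2 : (2 <= #|O|)%N.
  rewrite (cardsD1 x) xO ltnS card_gt0; apply/set0Pn; exists (g x).
  by rewrite !inE gxO gx.
have Lag := Lagrange sSE.
have S0 : (0 < #|S|)%N := cardG_gt0 S.
have ltS : (#|S| < m)%N.
  have : (#|S| * 1 < #|S| * #|E : S|)%N by rewrite ltn_pmul2l // -cardO.
  rewrite Lag; lia.
have IHS := IH S ltS (pgroupS sSE pE) (abelianS sSE cE).
have logE : logn p #|E| = (logn p #|S| + logn p #|E : S|)%N.
  by rewrite -Lag lognM // -cardO; apply: leq_trans O2.
have pi : p.-nat #|E : S| := pnat_dvd (dvdn_indexg E S) pE.
have eqi : #|E : S| = (p ^ logn p #|E : S|)%N by rewrite -p_part part_pnat_id.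
have a2 : (2 * logn p #|E : S| <= #|O|)%N.
  rewrite cardO; case: (two_le_exp (logn p #|E : S|) pp) => [h|->//].
  by rewrite {2}eqi.
have OM : O \subset moved E.
  apply/subsetP => y /orbitP [h hE <-]; rewrite inE; apply/existsP; exists g.
  rewrite gE /= /aperm; apply: contra gx => /eqP e.
  have cgh : commute g h by apply: (centsP cE).
  by apply/eqP; apply: (@perm_inj _ h); rewrite -permM cgh permM e.
have MS : moved S \subset moved E :\: O.
  apply/subsetP => y; rewrite !inE => /existsP [s /andP [sS sy]].
  have sE := subsetP sSE s sS.
  apply/andP; split; last by apply/existsP; exists s; rewrite sE.
  apply/negP => /orbitP [h hE yeq]; subst y.
  move: sS; rewrite inE => /andP [_ /astab1P]; rewrite /= /aperm => sx.
  have csh : commute s h by apply: (centsP cE).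
  by move: sy; rewrite /aperm -permM -csh permM sx eqxx.
have := subset_leq_card MS; rewrite cardsD (setIidPr OM).
have := subset_leq_card OM.
rewrite logE; lia.
Qed.

Theorem mainTheorem8 (n : nat) (A : {group {perm 'I_n}}) :
  abelian A ->
  exists (k : nat) (H : 'I_k -> {group {perm 'I_n}}),
    [/\ (2 * k <= n)%N,
        (forall i, H i :!=: 1%g)
      & (\big[dprod/1%g]_(i < k) H i)%g = A].
Proof.
move=> cA.
have [b defA atype] := abelian_structure cA.
exists (size b), (fun i : 'I_(size b) => <[nth (1%g : {perm 'I_n}) b i]>%G); split.
- have -> : size b = 'r(A) by rewrite -size_abelian_type // -atype size_map.
  have [p pp ->] := rank_witness A.
  have [E /pnElemP [sEA abE <-]] := p_rank_witness p A.
  apply: leq_trans (key pp (abelem_pgroup abE) (abelem_abelian abE)) _.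
  by rewrite -[n in (_ <= n)%N]card_ord max_card.
- move=> i; apply/eqP => e.
  have := abelian_type_gt1 A; rewrite -atype => /allP /(_ #[nth 1 b i]%g).
  rewrite map_f ?mem_nth //= => /(_ isT).
  by rewrite /order /= e cards1.
- by rewrite -defA (big_nth 1) big_mkord.
Qed.
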